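(* Let $(G,*,\le)$ be a totally ordered commutative semigroup, let $n\ge 1$, and let $a_1,a_2,\ldots,a_{2n}\in G$ (not necessarily distinct) with $a_1\le a_2\le\cdots\le a_{2n}$. Let $N\in G$. Suppose there are indices $i_1,j_1,\ldots,i_n,j_n$ with $\{i_1,j_1,\ldots,i_n,j_n\}=\{1,2,\ldots,2n\}$ (so these $2n$ indices are pairwise distinct and each of $1,\ldots,2n$ is used exactly once) such that $$a_{i_k}*a_{j_k}>N\quad\text{for all }k=1,\ldots,n.$$ Then $$a_k*a_{2n+1-k}>N\quad\text{for all }k=1,\ldots,n,$$ i.e. $a_1*a_{2n}>N$, $a_2*a_{2n-1}>N$, $\ldots$, $a_n*a_{n+1}>N$.
   Context: A totally ordered commutative semigroup is a triple $(G,*,\le)$ where $(G,* )$ is a commutative semigroup (an associative, commutative binary operation $*$ on a set $G$) and $\le$ is a total order on $G$ such that for all $\alpha,\beta,\gamma,\delta\in G$: if $\alpha\le\beta$ and $\gamma\le\delta$ then $\alpha*\gamma\le\beta*\delta$. Here $x>y$ means $y\le x$ and $x\ne y$. *)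

(* Defs.v *)
From Stdlib Require Import Arith Lia.

Definition TOCS (G : Type) (op : G -> G -> G) (le : G -> G -> Prop) : Prop :=
  (forall x y z, op x (op y z) = op (op x y) z) /\
  (forall x y, op x y = op y x) /\
  (forall x, le x x) /\
  (forall x y, le x y -> le y x -> x = y) /\
  (forall x y z, le x y -> le y z -> le x z) /\
  (forall x y, le x y \/ le y x) /\
  (forall a b c d, le a b -> le c d -> le (op a c) (op b d)).

Definition gt {G : Type} (le : G -> G -> Prop) (x y : G) : Prop :=
  le y x /\ x <> y.

(* Main.v *)
Require Import Defs.
From Stdlib Require Import Arith Lia Classical.

Fixpoint sm (f : nat -> nat) (n : nat) : nat :=
  match n with 0 => 0 | S p => sm f p + f (S p) end.

Lemma sm_le f g n : (forall m, 1 <= m <= n -> f m <= g m) -> sm f n <= sm g n.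
Proof. induction n; simpl; intros H; [lia|]. specialize (IHn ltac:(intros; apply H; lia)).
  specialize (H (S n) ltac:(lia)). lia. Qed.

Lemma sm_add f g n : sm (fun m => f m + g m) n = sm f n + sm g n.
Proof. induction n; simpl; lia. Qed.

Lemma sm_const c n : sm (fun _ => c) n = c * n.
Proof. induction n; simpl; lia. Qed.

Lemma sm_mul c f n : sm (fun m => c * f m) n = c * sm f n.
Proof. induction n; simpl; [lia|]. rewrite IHn; lia. Qed.

Lemma sm_swap (F : nat -> nat -> nat) p q :
  sm (fun m => sm (fun t => F m t) q) p = sm (fun t => sm (fun m => F m t) p) q.
Proof. induction p; simpl.
- induction q; simpl; lia.
- rewrite IHp. rewrite <- sm_add. reflexivity. Qed.

Lemma sm_ind X p : sm (fun m => if m <=? X then 1 else 0) p = Nat.min X p.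
Proof. induction p; [destruct X; reflexivity|]. change (sm (fun m => if m <=? X then 1 else 0) p + (if S p <=? X then 1 else 0) = Nat.min X (S p)). rewrite IHp. destruct (Nat.leb_spec (S p) X); lia. Qed.

Lemma sm_eq0 f x p : p < x -> sm (fun m => f m * (if m =? x then 1 else 0)) p = 0.
Proof. induction p; cbn [sm]; intros; [lia|]. rewrite IHp by lia.
  destruct (Nat.eqb_spec (S p) x); lia. Qed.

Lemma sm_eq f x p : sm (fun m => f m * (if m =? x then 1 else 0)) p <= f x.
Proof. induction p; cbn [sm]; [lia|]. destruct (Nat.eqb_spec (S p) x).
  - subst. rewrite sm_eq0 by lia. lia.
  - lia. Qed.

Lemma sm_ge_term f n t : 1 <= t <= n -> f t <= sm f n.
Proof. induction n; cbn [sm]; intros; [lia|]. destruct (Nat.eq_dec t (S n)); [subst; lia|].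
  specialize (IHn ltac:(lia)); lia. Qed.

Definition wt (X Y m : nat) := (if m <=? X then 1 else 0) + (if m <=? Y then 1 else 0).

Theorem theorem2p5 (G : Type) (op : G -> G -> G) (le : G -> G -> Prop)
  (HG : TOCS G op le) (n : nat) (Hn : 1 <= n) (a : nat -> G)
  (Hsorted : forall k, 1 <= k -> k < 2 * n -> le (a k) (a (S k)))
  (N : G) (i j : nat -> nat)
  (Hrange : forall k, 1 <= k <= n ->
     (1 <= i k <= 2 * n) /\ (1 <= j k <= 2 * n))
  (Hcover : forall m, 1 <= m <= 2 * n ->
     exists k, 1 <= k <= n /\ (i k = m \/ j k = m))
  (Hpairs : forall k, 1 <= k <= n -> gt le (op (a (i k)) (a (j k))) N) :
  forall k, 1 <= k <= n -> gt le (op (a k) (a (2 * n + 1 - k))) N.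
Proof.
  destruct HG as (Hassoc & Hcomm & Hrefl & Hanti & Htrans & Htot & Hmono).
  assert (Hmon : forall d p, 1 <= p -> p + d <= 2 * n -> le (a p) (a (p + d))).
  { induction d; intros p Hp Hpd. rewrite Nat.add_0_r; apply Hrefl.
    apply Htrans with (a (p + d)). apply IHd; lia.
    replace (p + S d) with (S (p + d)) by lia. apply Hsorted; lia. }
  assert (Hmon' : forall p q, 1 <= p <= q -> q <= 2 * n -> le (a p) (a q)).
  { intros p q H1 H2. replace q with (p + (q - p)) by lia. apply Hmon; lia. }
  intros k Hk.
  set (X := 2 * n + 1 - k).
  assert (Hex : exists t, 1 <= t <= n /\ wt X k (i t) + wt X k (j t) >= 3).
  { apply NNPP; intro Hno.
    assert (Hall : forall t, 1 <= t <= n -> wt X k (i t) + wt X k (j t) <= 2).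
    { intros t Ht. destruct (Nat.le_gt_cases (wt X k (i t) + wt X k (j t)) 2); auto.
      exfalso; apply Hno; exists t; split; auto; lia. }
    set (mem := fun m t => if orb (i t =? m) (j t =? m) then 1 else 0).
    assert (E1 : sm (wt X k) (2 * n) = 2 * n + 1).
    { unfold wt. rewrite sm_add, !sm_ind. unfold X; lia. }
    assert (E2 : sm (wt X k) (2 * n) <=
                 sm (fun m => sm (fun t => wt X k m * mem m t) n) (2 * n)).
    { apply sm_le. intros m Hm. destruct (Hcover m Hm) as (t0 & Ht0 & Hor).
      apply Nat.le_trans with (wt X k m * mem m t0).
      - unfold mem. destruct Hor as [-> | ->]; rewrite Nat.eqb_refl;
        [|rewrite Bool.orb_true_r]; simpl; lia.
      - apply (sm_ge_term (fun t => wt X k m * mem m t)); auto. }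
    rewrite sm_swap in E2.
    assert (E3 : sm (fun t => sm (fun m => wt X k m * mem m t) (2 * n)) n <= sm (fun _ => 2) n).
    { apply sm_le. intros t Ht. specialize (Hall t Ht).
      apply Nat.le_trans with
        (sm (fun m => wt X k m * (if m =? i t then 1 else 0)) (2 * n) +
         sm (fun m => wt X k m * (if m =? j t then 1 else 0)) (2 * n)).
      - rewrite <- sm_add. apply sm_le. intros m _. unfold mem.
        rewrite (Nat.eqb_sym m (i t)), (Nat.eqb_sym m (j t)).
        destruct (i t =? m), (j t =? m); simpl; lia.
      - pose proof (sm_eq (wt X k) (i t) (2 * n)).
        pose proof (sm_eq (wt X k) (j t) (2 * n)). lia. }
    rewrite sm_const in E3. lia. }
  destruct Hex as (t & Ht & Hw).
  destruct (Hrange t Ht) as [Hi Hj].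
  destruct (Hpairs t Ht) as [Hle Hne].
  unfold wt in Hw.
  assert (HiX : i t <= X /\ j t <= X /\ (i t <= k \/ j t <= k)).
  { destruct (Nat.leb_spec (i t) X), (Nat.leb_spec (i t) k),
             (Nat.leb_spec (j t) X), (Nat.leb_spec (j t) k); lia. }
  assert (Hbig : le (op (a (i t)) (a (j t))) (op (a k) (a X))).
  { destruct HiX as (H1 & H2 & [H3 | H3]).
    - apply Hmono; apply Hmon'; unfold X in *; lia.
    - rewrite Hcomm. apply Hmono; apply Hmon'; unfold X in *; lia. }
  split.
  - apply Htrans with (op (a (i t)) (a (j t))); auto.
  - intro Heq. apply Hne. apply Hanti; auto. rewrite <- Heq; auto.
Qed.
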